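(* Let $E$ be a pseudo effect algebra satisfying (RDP). Then: (a) $(\mathcal J(E),\le^+)$ is an Abelian Dedekind complete $\ell$-group. (b) If $\{m_i\}_{i\in I}$ is a nonempty family in $\mathcal J(E)$ bounded above in $\mathcal J(E)$ and $d(x):=\sup_i m_i(x)$ for $x\in E$, then for every $x\in E$ $$\Big(\bigvee_i m_i\Big)(x)=\sup\{d(x_1)+\cdots+d(x_n):\ x=x_1+\cdots+x_n,\ x_1,\dots,x_n\in E,\ n\ge1\}.$$ (c) If $\{m_i\}_{i\in I}$ is a nonempty family in $\mathcal J(E)$ bounded below in $\mathcal J(E)$ and $e(x):=\inf_i m_i(x)$ for $x\in E$, then for every $x\in E$ $$\Big(\bigwedge_i m_i\Big)(x)=\inf\{e(x_1)+\cdots+e(x_n):\ x=x_1+\cdots+x_n,\ x_1,\dots,x_n\in E,\ n\ge1\}.$$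
   Context: Pseudo effect algebra: partial algebra $(E;+,0,1)$ such that for all $a,b,c$: (i) $a+b$ and $(a+b)+c$ exist iff $b+c$ and $a+(b+c)$ exist, and then they are equal; (ii) there is exactly one $d$ and one $e$ with $a+d=e+a=1$; (iii) if $a+b$ exists there are $d,e$ with $a+b=d+a=b+e$; (iv) if $1+a$ or $a+1$ exists then $a=0$. (RDP): whenever $a_1+a_2=b_1+b_2$ there are $d_1,\dots,d_4$ with $d_1+d_2=a_1$, $d_3+d_4=a_2$, $d_1+d_3=b_1$, $d_2+d_4=b_2$. A signed measure is $m:E\to\mathbb R$ with $m(a+b)=m(a)+m(b)$ whenever $a+b$ is defined; a measure is a nonnegative signed measure; $m_1\le^+m_2$ iff $m_2-m_1$ is a measure. $\mathcal J(E)$ is the set of Jordan signed measures, i.e. signed measures that are differences of two measures, with pointwise addition. Dedekind complete: every nonempty subset bounded above has a supremum (and bounded below has an infimum). *)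

(* Defs.v *)
From Stdlib Require Import Reals List.
Import ListNotations.
Open Scope R_scope.

Section PEA.
Context {E : Type} (plus : E -> E -> option E) (zero one : E).

Definition padd (oa ob : option E) : option E :=
  match oa, ob with Some a, Some b => plus a b | _, _ => None end.

(* Pseudo effect algebra axioms (i)-(iv). Axiom (i) says: a+b and (a+b)+c exist
   iff b+c and a+(b+c) exist, and then they are equal. *)
Definition is_PEA : Prop :=
  (forall a b c, padd (plus a b) (Some c) = padd (Some a) (plus b c)) /\
  (forall a, (exists! d, plus a d = Some one) /\ (exists! e, plus e a = Some one)) /\
  (forall a b s, plus a b = Some s ->
     exists d e, plus d a = Some s /\ plus b e = Some s) /\
  (forall a, ((exists s, plus one a = Some s) \/ (exists s, plus a one = Some s)) ->
     a = zero).

Definition RDP : Prop :=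
  forall a1 a2 b1 b2 s, plus a1 a2 = Some s -> plus b1 b2 = Some s ->
    exists d1 d2 d3 d4,
      plus d1 d2 = Some a1 /\ plus d3 d4 = Some a2 /\
      plus d1 d3 = Some b1 /\ plus d2 d4 = Some b2.

(* x1 + (x2 + (... + xn)) as a partial sum (by (i) any bracketing agrees) *)
Fixpoint psum (l : list E) : option E :=
  match l with
  | [] => Some zero
  | [a] => Some a
  | a :: l' => padd (Some a) (psum l')
  end.

Definition signed_measure (m : E -> R) : Prop :=
  forall a b s, plus a b = Some s -> m s = m a + m b.

Definition measure (m : E -> R) : Prop :=
  signed_measure m /\ forall a, 0 <= m a.

Definition le_plus (m1 m2 : E -> R) : Prop := measure (fun x => m2 x - m1 x).

Definition Jordan (m : E -> R) : Prop :=
  exists m1 m2, measure m1 /\ measure m2 /\ forall x, m x = m1 x - m2 x.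

Definition is_sup_J (S : (E -> R) -> Prop) (s : E -> R) : Prop :=
  Jordan s /\ (forall m, S m -> le_plus m s) /\
  (forall u, Jordan u -> (forall m, S m -> le_plus m u) -> le_plus s u).

Definition is_inf_J (S : (E -> R) -> Prop) (s : E -> R) : Prop :=
  Jordan s /\ (forall m, S m -> le_plus s m) /\
  (forall u, Jordan u -> (forall m, S m -> le_plus u m) -> le_plus u s).

Definition abelian_Dedekind_complete_lgroup : Prop :=
  (* subgroup of (E -> R) under pointwise addition (hence Abelian) *)
  Jordan (fun _ => 0) /\
  (forall m, Jordan m -> Jordan (fun x => - m x)) /\
  (forall m1 m2, Jordan m1 -> Jordan m2 -> Jordan (fun x => m1 x + m2 x)) /\
  (forall m, Jordan m -> le_plus m m) /\
  (forall m1 m2 m3, Jordan m1 -> Jordan m2 -> Jordan m3 ->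
     le_plus m1 m2 -> le_plus m2 m3 -> le_plus m1 m3) /\
  (forall m1 m2, Jordan m1 -> Jordan m2 ->
     le_plus m1 m2 -> le_plus m2 m1 -> forall x, m1 x = m2 x) /\
  (forall m1 m2 m, Jordan m1 -> Jordan m2 -> Jordan m -> le_plus m1 m2 ->
     le_plus (fun x => m1 x + m x) (fun x => m2 x + m x)) /\
  (forall m1 m2, Jordan m1 -> Jordan m2 ->
     (exists s, is_sup_J (fun f => f = m1 \/ f = m2) s) /\
     (exists t, is_inf_J (fun f => f = m1 \/ f = m2) t)) /\
  (forall S : (E -> R) -> Prop, (forall m, S m -> Jordan m) -> (exists m, S m) ->
     (exists u, Jordan u /\ forall m, S m -> le_plus m u) ->
     exists s, is_sup_J S s) /\
  (forall S : (E -> R) -> Prop, (forall m, S m -> Jordan m) -> (exists m, S m) ->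
     (exists u, Jordan u /\ forall m, S m -> le_plus u m) ->
     exists t, is_inf_J S t).

End PEA.

Definition is_lower_bound (P : R -> Prop) (m : R) : Prop := forall x, P x -> m <= x.
Definition is_glb (P : R -> Prop) (m : R) : Prop :=
  is_lower_bound P m /\ forall b, is_lower_bound P b -> b <= m.

(* Main.v *)
Require Import Defs.
From Stdlib Require Import Reals List Lra.
Import ListNotations.
Open Scope R_scope.

Definition lsum {E} (f : E -> R) (l : list E) := fold_right Rplus 0 (map f l).

Definition decset {E} plus (zero : E) (d : E -> R) (x : E) : R -> Prop :=
  fun r => exists l : list E, l <> [] /\ psum plus zero l = Some x /\
                         r = fold_right Rplus 0 (map d l).

Lemma lsum_app {E} (f : E -> R) l1 l2 : lsum f (l1 ++ l2) = lsum f l1 + lsum f l2.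
Proof. induction l1; unfold lsum in *; simpl; [ring| rewrite IHl1; ring]. Qed.

Lemma lsum_mono {E} (f g : E -> R) l : (forall y, f y <= g y) -> lsum f l <= lsum g l.
Proof. intro H; induction l; unfold lsum in *; simpl; [lra| specialize (H a); lra]. Qed.

Lemma lsum_neg {E} (f : E -> R) l : lsum (fun x => - f x) l = - lsum f l.
Proof. induction l; unfold lsum in *; simpl; [ring| rewrite IHl; ring]. Qed.

Lemma psum_cons {E} plus zero (a : E) l : l <> [] ->
  psum plus zero (a :: l) = padd plus (Some a) (psum plus zero l).
Proof. destruct l; [congruence| reflexivity]. Qed.

Lemma sm_psum {E} plus zero (m : E -> R) : signed_measure plus m ->
  forall l x, l <> [] -> psum plus zero l = Some x -> m x = lsum m l.
Proof.
  intros Hm l; induction l as [|a l IH]; intros x Hne Hp; [congruence|].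
  destruct l as [|b l'].
  - simpl in Hp. inversion Hp. unfold lsum; simpl; ring.
  - rewrite psum_cons in Hp by congruence.
    destruct (psum plus zero (b :: l')) as [y|] eqn:Hy; [|discriminate].
    simpl in Hp. rewrite (Hm _ _ _ Hp). rewrite (IH y) by first [congruence | assumption].
    unfold lsum; simpl; ring.
Qed.

Lemma psum_app {E} plus (zero : E)
  (HA : forall a b c : E, padd plus (plus a b) (Some c) = padd plus (Some a) (plus b c)) :
  forall l1 l2 a b s, l1 <> [] -> l2 <> [] -> psum plus zero l1 = Some a ->
    psum plus zero l2 = Some b -> plus a b = Some s -> psum plus zero (l1 ++ l2) = Some s.
Proof.
  induction l1 as [|x l1 IH]; intros l2 a b s H1 H2 Ha Hb Hs; [congruence|].
  destruct l1 as [|y l1'].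
  - simpl in Ha. inversion Ha; subst. change ([a] ++ l2) with (a :: l2).
    rewrite psum_cons by auto. rewrite Hb. simpl. exact Hs.
  - rewrite psum_cons in Ha by congruence.
    destruct (psum plus zero (y :: l1')) as [a'|] eqn:Ha'; [|discriminate]. simpl in Ha.
    pose proof (HA x a' b) as H. rewrite Ha in H. simpl in H. rewrite Hs in H.
    destruct (plus a' b) as [c|] eqn:Hc; [|discriminate]. simpl in H.
    change ((x :: y :: l1') ++ l2) with (x :: ((y :: l1') ++ l2)).
    rewrite psum_cons by (simpl; congruence).
    rewrite (IH l2 a' b c) by first [congruence | assumption]. simpl. congruence.
Qed.

Lemma gen_rdp {E} plus (zero : E) (HR : RDP plus) : forall l x a b, l <> [] ->
  psum plus zero l = Some x -> plus a b = Some x ->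
  exists ly lz, ly <> [] /\ lz <> [] /\ psum plus zero ly = Some a /\ psum plus zero lz = Some b /\
   forall g : E -> R, (forall y z w, plus y z = Some w -> g w <= g y + g z) ->
     lsum g l <= lsum g ly + lsum g lz.
Proof.
  induction l as [|x0 l IH]; intros x a b Hne Hp Hab; [congruence|].
  destruct l as [|y0 l'].
  - simpl in Hp. inversion Hp; subst. exists [a], [b].
    split; [congruence|]. split; [congruence|]. split; [reflexivity|]. split; [reflexivity|].
    intros g Hg. unfold lsum; simpl. specialize (Hg _ _ _ Hab). lra.
  - rewrite psum_cons in Hp by congruence.
    destruct (psum plus zero (y0 :: l')) as [r|] eqn:Hr; [|discriminate]. simpl in Hp.
    destruct (HR a b x0 r x Hab Hp) as (d1 & d2 & d3 & d4 & H12 & H34 & H13 & H24).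
    destruct (IH r d2 d4 ltac:(congruence) eq_refl H24) as (ly & lz & Hly & Hlz & Py & Pz & Hg).
    exists (d1 :: ly), (d3 :: lz).
    split; [congruence|]. split; [congruence|].
    split; [rewrite psum_cons by auto; rewrite Py; simpl; exact H12|].
    split; [rewrite psum_cons by auto; rewrite Pz; simpl; exact H34|].
    intros g Hg0. specialize (Hg g Hg0). specialize (Hg0 _ _ _ H13).
    unfold lsum in *; simpl in *. lra.
Qed.

Lemma measure_ext {E} plus (f g : E -> R) : (forall x, f x = g x) -> measure plus f -> measure plus g.
Proof.
  intros Hfg [Hs Hn]. split.
  - intros a b s H. rewrite <- !Hfg. apply Hs; auto.
  - intro a. rewrite <- Hfg. auto.
Qed.

Lemma sm_ext {E} plus (f g : E -> R) : (forall x, f x = g x) -> signed_measure plus f -> signed_measure plus g.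
Proof. intros Hfg Hs a b s H. rewrite <- !Hfg. apply Hs; auto. Qed.

Lemma sm_comb {E} plus (f g : E -> R) (al be : R) : signed_measure plus f -> signed_measure plus g ->
  signed_measure plus (fun x => al * f x + be * g x).
Proof. intros Hf Hg a b s H. rewrite (Hf _ _ _ H), (Hg _ _ _ H). ring. Qed.

Lemma sm_diff {E} plus (f g : E -> R) : signed_measure plus f -> signed_measure plus g ->
  signed_measure plus (fun x => f x - g x).
Proof. intros Hf Hg. eapply sm_ext; [|apply (sm_comb _ _ _ 1 (-1) Hf Hg)]. intro; simpl; ring. Qed.

Lemma sm_add {E} plus (f g : E -> R) : signed_measure plus f -> signed_measure plus g ->
  signed_measure plus (fun x => f x + g x).
Proof. intros Hf Hg. eapply sm_ext; [|apply (sm_comb _ _ _ 1 1 Hf Hg)]. intro; simpl; ring. Qed.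

Lemma measure_add {E} plus (f g : E -> R) : measure plus f -> measure plus g ->
  measure plus (fun x => f x + g x).
Proof. intros [Hf Nf] [Hg Ng]. split; [apply sm_add; auto| intro a; specialize (Nf a); specialize (Ng a); lra]. Qed.

Lemma measure_zero {E} plus : measure plus (fun _ : E => 0).
Proof. split; [intros a b s H; ring| intros; lra]. Qed.

Lemma Jordan_sm {E} plus (m : E -> R) : Jordan plus m -> signed_measure plus m.
Proof. intros (p & q & [Hp _] & [Hq _] & H). eapply sm_ext; [|apply (sm_diff _ _ _ Hp Hq)]. intro; simpl; auto. Qed.

Lemma Jordan_ext {E} plus (f g : E -> R) : (forall x, f x = g x) -> Jordan plus f -> Jordan plus g.
Proof. intros Hfg (p & q & Hp & Hq & H). exists p, q. split; auto. split; auto. intro x; rewrite <- Hfg; auto. Qed.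

Lemma Jordan_neg {E} plus (f : E -> R) : Jordan plus f -> Jordan plus (fun x => - f x).
Proof. intros (p & q & Hp & Hq & H). exists q, p. split; auto. split; auto. intro x; rewrite H; ring. Qed.

Lemma Jordan_add {E} plus (f g : E -> R) : Jordan plus f -> Jordan plus g -> Jordan plus (fun x => f x + g x).
Proof.
  intros (p & q & Hp & Hq & H) (p' & q' & Hp' & Hq' & H').
  exists (fun x => p x + p' x), (fun x => q x + q' x).
  split; [apply measure_add; auto|]. split; [apply measure_add; auto|].
  intro x; rewrite H, H'; ring.
Qed.

Lemma le_plus_pt {E} plus (f g : E -> R) : le_plus plus f g -> forall x, f x <= g x.
Proof. intros [_ H] x. specialize (H x). simpl in H. lra. Qed.

Lemma le_plus_intro {E} plus (f g : E -> R) : signed_measure plus f -> signed_measure plus g ->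
  (forall x, f x <= g x) -> le_plus plus f g.
Proof. intros Hf Hg H. split; [apply sm_diff; auto| intro a; specialize (H a); lra]. Qed.

Lemma dec_bound {E} plus (zero : E) (d u : E -> R) : (forall y, d y <= u y) -> signed_measure plus u ->
  forall x r, decset plus zero d x r -> r <= u x.
Proof.
  intros Hdu Hu x r (l & Hne & Hp & ->).
  rewrite (sm_psum plus zero u Hu l x Hne Hp). apply (lsum_mono d u l Hdu).
Qed.

Lemma D_exists {E} plus (zero : E) (d u : E -> R) : (forall y, d y <= u y) -> signed_measure plus u ->
  exists D, forall x, is_lub (decset plus zero d x) (D x).
Proof.
  intros Hdu Hu.
  assert (Hb : forall x, bound (decset plus zero d x)).
  { intro x. exists (u x). intros r Hr. eapply dec_bound; eauto. }
  assert (Hn : forall x, exists r, decset plus zero d x r).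
  { intro x. exists (d x). exists [x]. split; [congruence|]. split; [reflexivity|]. simpl; ring. }
  exists (fun x => proj1_sig (completeness _ (Hb x) (Hn x))).
  intro x. exact (proj2_sig (completeness _ (Hb x) (Hn x))).
Qed.

Lemma d_exists {E} plus (S : (E -> R) -> Prop) (m0 : E -> R) (Hm0 : S m0) (u : E -> R)
  (Hub : forall m, S m -> le_plus plus m u) :
  exists d, forall x, is_lub (fun r => exists f, S f /\ r = f x) (d x).
Proof.
  assert (Hb : forall x, bound (fun r => exists f, S f /\ r = f x)).
  { intro x. exists (u x). intros r (f & Hf & ->). apply (le_plus_pt plus); auto. }
  assert (Hn : forall x, exists r, (fun r => exists f, S f /\ r = f x) r).
  { intro x. exists (m0 x). exists m0; auto. }
  exists (fun x => proj1_sig (completeness _ (Hb x) (Hn x))).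
  intro x. exact (proj2_sig (completeness _ (Hb x) (Hn x))).
Qed.

Lemma sup_core {E} plus (zero : E)
  (HA : forall a b c : E, padd plus (plus a b) (Some c) = padd plus (Some a) (plus b c))
  (HR : RDP plus) (S : (E -> R) -> Prop)
  (HS : forall m, S m -> Jordan plus m) (m0 : E -> R) (Hm0 : S m0)
  (d : E -> R) (Hd : forall x, is_lub (fun r => exists f, S f /\ r = f x) (d x))
  (D : E -> R) (HD : forall x, is_lub (decset plus zero d x) (D x)) :
  is_sup_J plus S D.
Proof.
  assert (dge : forall f x, S f -> f x <= d x).
  { intros f x Hf. apply (proj1 (Hd x)). exists f; auto. }
  assert (dsub : forall y z w, plus y z = Some w -> d w <= d y + d z).
  { intros y z w H. apply (proj2 (Hd w)). intros r (f & Hf & ->).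
    rewrite (Jordan_sm _ _ (HS f Hf) _ _ _ H). pose proof (dge f y Hf); pose proof (dge f z Hf); lra. }
  assert (dleD : forall x, d x <= D x).
  { intro x. apply (proj1 (HD x)). exists [x]. split; [congruence|]. split; [reflexivity|]. simpl; ring. }
  assert (Dub : forall x l, l <> [] -> psum plus zero l = Some x -> lsum d l <= D x).
  { intros x l Hne Hp. apply (proj1 (HD x)). exists l; auto. }
  assert (Dsm : signed_measure plus D).
  { intros a b s H. apply Rle_antisym.
    - apply (proj2 (HD s)). intros r (l & Hne & Hp & ->).
      destruct (gen_rdp plus zero HR l s a b Hne Hp H) as (ly & lz & Hly & Hlz & Py & Pz & Hg).
      specialize (Hg d dsub). pose proof (Dub _ _ Hly Py). pose proof (Dub _ _ Hlz Pz).
      change (fold_right Rplus 0 (map d l)) with (lsum d l). lra.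
    - assert (H1 : forall la, la <> [] -> psum plus zero la = Some a -> lsum d la <= D s - D b).
      { intros la Hla Pa.
        assert (D b <= D s - lsum d la); [|lra].
        apply (proj2 (HD b)). intros r (lb & Hlb & Pb & ->).
        pose proof (psum_app plus zero HA la lb a b s Hla Hlb Pa Pb H) as Pab.
        assert (Hne : la ++ lb <> []) by (destruct la; simpl; congruence).
        pose proof (Dub _ _ Hne Pab). rewrite lsum_app in H0.
        change (fold_right Rplus 0 (map d lb)) with (lsum d lb). lra. }
      assert (D a <= D s - D b); [|lra].
      apply (proj2 (HD a)). intros r (la & Hla & Pa & ->). apply H1; auto. }
  destruct (HS m0 Hm0) as (p & q & Hp & Hq & Hpq).
  split; [|split].
  - exists (fun x => D x - m0 x + p x), q. split; [|split; [auto| intro x; rewrite Hpq; ring]].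
    split.
    + apply sm_add; [apply sm_diff; [auto| apply Jordan_sm, HS; auto]| apply Hp].
    + intro a. pose proof (dge m0 a Hm0). pose proof (dleD a). pose proof (proj2 Hp a). lra.
  - intros f Hf. apply le_plus_intro; [apply Jordan_sm; auto| auto|].
    intro x. pose proof (dge f x Hf). pose proof (dleD x). lra.
  - intros u Hu Hub. apply le_plus_intro; [auto| apply Jordan_sm; auto|].
    intro x. apply (proj2 (HD x)). intros r Hr. eapply dec_bound; [| apply Jordan_sm; exact Hu| exact Hr].
    intro y. apply (proj2 (Hd y)). intros r' (f & Hf & ->). apply (le_plus_pt plus); auto.
Qed.

Lemma sup_unique {E} plus (S : (E -> R) -> Prop) s1 s2 :
  is_sup_J plus S s1 -> is_sup_J plus S s2 -> forall x, s1 x = s2 x.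
Proof.
  intros (J1 & U1 & L1) (J2 & U2 & L2) x.
  pose proof (le_plus_pt plus _ _ (L1 s2 J2 U2) x). pose proof (le_plus_pt plus _ _ (L2 s1 J1 U1) x). lra.
Qed.

Lemma inf_unique {E} plus (S : (E -> R) -> Prop) s1 s2 :
  is_inf_J plus S s1 -> is_inf_J plus S s2 -> forall x, s1 x = s2 x.
Proof.
  intros (J1 & U1 & L1) (J2 & U2 & L2) x.
  pose proof (le_plus_pt plus _ _ (L1 s2 J2 U2) x). pose proof (le_plus_pt plus _ _ (L2 s1 J1 U1) x). lra.
Qed.

Lemma inf_from_sup {E} plus (S S' : (E -> R) -> Prop)
  (HS' : forall f, S' f <-> exists g, S g /\ forall x, f x = - g x)
  (HS : forall m, S m -> Jordan plus m) s :
  is_sup_J plus S' s -> is_inf_J plus S (fun x => - s x).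
Proof.
  intros (Js & Us & Ls). split; [apply Jordan_neg; auto| split].
  - intros m Hm. assert (H : S' (fun x => - m x)) by (apply HS'; exists m; auto).
    specialize (Us _ H). eapply measure_ext; [|exact Us]. intro x; simpl; ring.
  - intros u Hu Hl.
    assert (H : le_plus plus s (fun x => - u x)).
    { apply Ls; [apply Jordan_neg; auto|]. intros f Hf. apply HS' in Hf. destruct Hf as (g & Hg & Hfg).
      specialize (Hl g Hg). eapply measure_ext; [|exact Hl]. intro x; simpl; rewrite Hfg; ring. }
    eapply measure_ext; [|exact H]. intro x; simpl; ring.
Qed.

Lemma lub_neg_of_glb (P Q : R -> Prop) a : is_glb P a -> (forall r, Q r <-> P (- r)) -> is_lub Q (- a).
Proof.
  intros [Hl Hg] HQ. split.
  - intros r Hr. apply HQ in Hr. specialize (Hl _ Hr). lra.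
  - intros b Hb. assert (b' : is_lower_bound P (- b)).
    { intros y Hy. assert (Q (- y)) by (apply HQ; rewrite Ropp_involutive; auto).
      specialize (Hb _ H). lra. }
    specialize (Hg _ b'). lra.
Qed.

Lemma glb_of_neg_lub (P Q : R -> Prop) a : is_lub Q a -> (forall r, P r <-> Q (- r)) -> is_glb P (- a).
Proof.
  intros [Hl Hg] HP. split.
  - intros r Hr. apply HP in Hr. specialize (Hl _ Hr). lra.
  - intros b Hb. assert (b' : is_upper_bound Q (- b)).
    { intros y Hy. assert (P (- y)) by (apply HP; rewrite Ropp_involutive; auto).
      specialize (Hb _ H). lra. }
    specialize (Hg _ b'). lra.
Qed.

Lemma is_lub_ext (P Q : R -> Prop) a : (forall r, P r <-> Q r) -> is_lub P a -> is_lub Q a.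
Proof.
  intros H [Hu Hl]. split.
  - intros r Hr. apply Hu, H; auto.
  - intros b Hb. apply Hl. intros r Hr. apply Hb, H; auto.
Qed.

Lemma sup_exists {E} plus (zero : E)
  (HA : forall a b c : E, padd plus (plus a b) (Some c) = padd plus (Some a) (plus b c))
  (HR : RDP plus) (S : (E -> R) -> Prop)
  (HS : forall m, S m -> Jordan plus m) (Hne : exists m, S m)
  (Hb : exists u, Jordan plus u /\ forall m, S m -> le_plus plus m u) :
  exists s, is_sup_J plus S s.
Proof.
  destruct Hne as [m0 Hm0]. destruct Hb as (u & Hu & Hub).
  destruct (d_exists plus S m0 Hm0 u Hub) as [d Hd].
  assert (Hdu : forall y, d y <= u y).
  { intro y. apply (proj2 (Hd y)). intros r (f & Hf & ->). apply (le_plus_pt plus); auto. }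
  destruct (D_exists plus zero d u Hdu (Jordan_sm _ _ Hu)) as [D HD].
  exists D. eapply sup_core; eauto.
Qed.

Lemma inf_exists {E} plus (zero : E)
  (HA : forall a b c : E, padd plus (plus a b) (Some c) = padd plus (Some a) (plus b c))
  (HR : RDP plus) (S : (E -> R) -> Prop)
  (HS : forall m, S m -> Jordan plus m) (Hne : exists m, S m)
  (Hb : exists u, Jordan plus u /\ forall m, S m -> le_plus plus u m) :
  exists t, is_inf_J plus S t.
Proof.
  set (S' := fun f : E -> R => exists g, S g /\ forall x, f x = - g x).
  destruct Hne as [m0 Hm0]. destruct Hb as (u & Hu & Hub).
  destruct (sup_exists plus zero HA HR S') as [s Hs].
  - intros f (g & Hg & Hfg). eapply Jordan_ext; [intro x; symmetry; apply Hfg|].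
    apply Jordan_neg; auto.
  - exists (fun x => - m0 x). exists m0; split; auto.
  - exists (fun x => - u x). split; [apply Jordan_neg; auto|].
    intros f (g & Hg & Hfg). specialize (Hub g Hg). eapply measure_ext; [|exact Hub].
    intro x; simpl; rewrite Hfg; ring.
  - exists (fun x => - s x). eapply inf_from_sup; [| exact HS| exact Hs]. intro f; unfold S'; tauto.
Qed.

Theorem theorem3p5 (E : Type) (plus : E -> E -> option E) (zero one : E)
  (HE : is_PEA plus zero one) (HR : RDP plus) :
  (* (a) *)
  abelian_Dedekind_complete_lgroup plus /\
  (* (b) *)
  (forall (I : Type) (m : I -> E -> R), inhabited I ->
     (forall i, Jordan plus (m i)) ->
     (exists u, Jordan plus u /\ forall i, le_plus plus (m i) u) ->
     forall d : E -> R, (forall x, is_lub (fun r => exists i, r = m i x) (d x)) ->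
     forall s, is_sup_J plus (fun f => exists i, f = m i) s ->
     forall x, is_lub (fun r => exists l : list E, l <> [] /\
                         psum plus zero l = Some x /\
                         r = fold_right Rplus 0 (map d l)) (s x)) /\
  (* (c) *)
  (forall (I : Type) (m : I -> E -> R), inhabited I ->
     (forall i, Jordan plus (m i)) ->
     (exists u, Jordan plus u /\ forall i, le_plus plus u (m i)) ->
     forall e : E -> R, (forall x, is_glb (fun r => exists i, r = m i x) (e x)) ->
     forall t, is_inf_J plus (fun f => exists i, f = m i) t ->
     forall x, is_glb (fun r => exists l : list E, l <> [] /\
                         psum plus zero l = Some x /\
                         r = fold_right Rplus 0 (map e l)) (t x)).
Proof.
  destruct HE as [HA _].
  split; [|split].
  -
    split; [exists (fun _ => 0), (fun _ => 0); split; [apply measure_zero|]; split; [apply measure_zero| intro; ring]|].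
    split; [intros; apply Jordan_neg; auto|].
    split; [intros; apply Jordan_add; auto|].
    split; [intros; eapply measure_ext; [|apply measure_zero]; intro; simpl; ring|].
    split; [intros m1 m2 m3 _ _ _ H12 H23; eapply measure_ext; [|apply (measure_add _ _ _ H12 H23)]; intro; simpl; ring|].
    split; [intros m1 m2 _ _ H12 H21 x; pose proof (le_plus_pt plus _ _ H12 x); pose proof (le_plus_pt plus _ _ H21 x); lra|].
    split; [intros m1 m2 m _ _ _ H; eapply measure_ext; [|exact H]; intro; simpl; ring|].
    split; [|split; [intros; eapply sup_exists; eauto| intros; eapply inf_exists; eauto]].
    intros m1 m2 J1 J2. split.
    + eapply sup_exists; eauto.
      * intros f [->| ->]; auto.
      * destruct J1 as (p1 & q1 & Hp1 & Hq1 & E1). destruct J2 as (p2 & q2 & Hp2 & Hq2 & E2).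
        exists (fun x => p1 x + p2 x). split.
        { exists (fun x => p1 x + p2 x), (fun _ => 0). split; [apply measure_add; auto|].
          split; [apply measure_zero| intro; ring]. }
        intros f [->| ->].
        { eapply measure_ext; [|apply (measure_add _ _ _ Hp2 Hq1)]. intro x; simpl; rewrite E1; ring. }
        { eapply measure_ext; [|apply (measure_add _ _ _ Hp1 Hq2)]. intro x; simpl; rewrite E2; ring. }
    + eapply inf_exists; eauto.
      * intros f [->| ->]; auto.
      * destruct J1 as (p1 & q1 & Hp1 & Hq1 & E1). destruct J2 as (p2 & q2 & Hp2 & Hq2 & E2).
        exists (fun x => - (q1 x + q2 x)). split.
        { exists (fun _ => 0), (fun x => q1 x + q2 x). split; [apply measure_zero|].
          split; [apply measure_add; auto| intro; ring]. }
        intros f [->| ->].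
        { eapply measure_ext; [|apply (measure_add _ _ _ Hp1 Hq2)]. intro x; simpl; rewrite E1; ring. }
        { eapply measure_ext; [|apply (measure_add _ _ _ Hp2 Hq1)]. intro x; simpl; rewrite E2; ring. }
  -
    intros I m [i0] Hm (u & Hu & Hub) d Hd s Hs x.
    set (S := fun f => exists i, f = m i).
    assert (HS : forall f, S f -> Jordan plus f) by (intros f [i ->]; auto).
    assert (Hd' : forall x, is_lub (fun r => exists f, S f /\ r = f x) (d x)).
    { intro y. eapply is_lub_ext; [|exact (Hd y)]. intro r; split.
      - intros [i ->]. exists (m i); split; [exists i; auto| auto].
      - intros (f & [i ->] & ->). exists i; auto. }
    assert (Hdu : forall y, d y <= u y).
    { intro y. apply (proj2 (Hd y)). intros r [i ->]. apply (le_plus_pt plus); auto. }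
    destruct (D_exists plus zero d u Hdu (Jordan_sm _ _ Hu)) as [D HD].
    assert (HsD : is_sup_J plus S D) by (eapply sup_core; eauto; exists i0; auto).
    rewrite (sup_unique plus S s D Hs HsD x). exact (HD x).
  -
    intros I m [i0] Hm (u & Hu & Hub) e He t Ht x.
    set (S := fun f => exists i, f = m i).
    set (S' := fun f : E -> R => exists g, S g /\ forall x, f x = - g x).
    assert (HS : forall f, S f -> Jordan plus f) by (intros f [i ->]; auto).
    assert (HS' : forall f, S' f -> Jordan plus f).
    { intros f (g & Hg & Hfg). eapply Jordan_ext; [intro y; symmetry; apply Hfg|].
      apply Jordan_neg; auto. }
    assert (Hd' : forall x, is_lub (fun r => exists f, S' f /\ r = f x) (- e x)).
    { intro y. eapply lub_neg_of_glb; [exact (He y)|]. intro r; split.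
      - intros (f & (g & [i ->] & Hfg) & ->). exists i. rewrite Hfg; ring.
      - intros [i Hi]. exists (fun x => - m i x). split.
        + exists (m i). split; [exists i; auto| auto].
        + lra. }
    assert (Hdu : forall y, - e y <= - u y).
    { intro y. assert (u y <= e y); [|lra]. apply (proj2 (He y)). intros r [i ->].
      apply (le_plus_pt plus); auto. }
    destruct (D_exists plus zero (fun y => - e y) (fun y => - u y) Hdu
               (Jordan_sm _ _ (Jordan_neg _ _ Hu))) as [D HD].
    assert (HsD : is_sup_J plus S' D).
    { assert (Hm0 : S' (fun x => - m i0 x)) by (exists (m i0); split; [exists i0; auto| auto]).
      exact (sup_core plus zero HA HR S' HS' _ Hm0 _ Hd' D HD). }
    assert (HiD : is_inf_J plus S (fun x => - D x)).
    { eapply inf_from_sup; [| exact HS| exact HsD]. intro f; unfold S'; tauto. }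
    rewrite (inf_unique plus S t _ Ht HiD x).
    eapply glb_of_neg_lub; [exact (HD x)|]. intro r; split.
    + intros (l & Hne & Hp & ->). exists l. split; auto. split; auto.
      change (- lsum e l = lsum (fun y => - e y) l). rewrite lsum_neg; auto.
    + intros (l & Hne & Hp & Hr). exists l. split; auto. split; auto.
      change (- r = lsum (fun y => - e y) l) in Hr. rewrite lsum_neg in Hr.
      change (r = lsum e l). lra.
Qed.
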